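(* Let $U$ be a one-dimensional quantum walk on $\mathcal H=\bigoplus_{n\in\mathbb Z}\mathcal H_n$. Then $U$ is unitary equivalent to \[ U_{r,\theta}=\sum_{n\in\mathbb Z}|e_1^{n-1}\rangle\langle r_ne_1^n+e^{i\theta_n}s_ne_2^n|+|e_2^{n+1}\rangle\langle -e^{-i\theta_n}s_ne_1^n+r_ne_2^n| \] for some sequences $0\le r_n\le 1$ and $\theta_n\in\mathbb R$ ($n\in\mathbb Z$), where $s_n=\sqrt{1-r_n^2}$ and $\theta_0=\theta_1=0$.
   Context: Let $\mathcal H_n=\mathbb C^2$ for $n\in\mathbb Z$, $\mathcal H=\bigoplus_{n\in\mathbb Z}\mathcal H_n$, $P_n$ the orthogonal projection of $\mathcal H$ onto $\mathcal H_n$, and $\{e_1^n,e_2^n\}$ the standard basis of $\mathcal H_n$. Dirac notation: for $x,y\in\mathcal H$, $|x\rangle\langle y|$ is the rank-one operator $z\mapsto\langle y,z\rangle x$ (inner product conjugate-linear in the first argument). A one-dimensional quantum walk is a unitary operator $U$ on $\mathcal H$ such that $\operatorname{rank}(P_nUP_m)=1$ if $m=n\pm1$ and $\operatorname{rank}(P_nUP_m)=0$ otherwise. Since $U$ and $e^{i\lambda}U$ are identified, two such unitaries $U_1,U_2$ are called unitary equivalent if there exist $\lambda\in\mathbb R$ and a unitary $W=\bigoplus_{n\in\mathbb Z}W_n$ (each $W_n$ a unitary on $\mathcal H_n$) with $e^{i\lambda}WU_1W^*=U_2$. *)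

(* Defs.v *)
From HB Require Import structures.
From mathcomp Require Import all_boot all_order all_algebra.
From mathcomp Require Import complex.
From mathcomp Require Import reals trigo.
Set Implicit Arguments. Unset Strict Implicit. Unset Printing Implicit Defensive.
Import Order.TTheory GRing.Theory Num.Theory.
Local Open Scope ring_scope.

(* The Hilbert space H = (+)_{n in Z} C^2 with standard basis e_1^n, e_2^n.
   A bounded operator T on H is represented by its block matrix:
   T n m : 'M_2 is the matrix of P_n T P_m : H_m -> H_n in the standard
   bases, i.e. (T n m) i j = < e_i^n , T e_j^m >. *)
Definition blockop (R : realType) := int -> int -> 'M[R[i]]_2.

Definition adjmx (R : realType) (m n : nat) (A : 'M[R[i]]_(m, n)) : 'M[R[i]]_(n, m) :=
  (map_mx (@conjc R) A)^T.

Definition expi (R : realType) (t : R) : R[i] := (cos t +i* sin t)%C.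

Definition e1 (R : realType) : 'cV[R[i]]_2 := \col_(k < 2) (if k == 0 then 1 else 0).
Definition e2 (R : realType) : 'cV[R[i]]_2 := \col_(k < 2) (if k == 1 then 1 else 0).

(* Dirac |x><y| (inner product conjugate-linear in the first argument):
   z |-> <y,z> x, whose matrix is x y^*. *)
Definition ketbra (R : realType) (x y : 'cV[R[i]]_2) : 'M[R[i]]_2 := x *m adjmx y.

(* Under the band condition (blocks vanish
   unless |n - m| = 1) all nonzero terms of the infinite sum
   sum_k (T k n)^* (T k m) occur for k in {n-1, n, n+1}, so these finite sums
   are the exact block entries of the operator products. *)
Definition adjmul (R : realType) (T : blockop R) (n m : int) : 'M[R[i]]_2 :=
  \sum_(k < 3) adjmx (T (n - 1 + (k : nat)%:Z) n) *m T (n - 1 + (k : nat)%:Z) m.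
Definition muladj (R : realType) (T : blockop R) (n m : int) : 'M[R[i]]_2 :=
  \sum_(k < 3) T n (n - 1 + (k : nat)%:Z) *m adjmx (T m (n - 1 + (k : nat)%:Z)).

Definition is_qwalk (R : realType) (U : blockop R) : Prop :=
  (forall n m : int,
     \rank (U n m) = (if (m == n + 1) || (m == n - 1) then 1%N else 0%N)) /\
  (forall n m : int, adjmul U n m = (n == m)%:R%:M) /\
  (forall n m : int, muladj U n m = (n == m)%:R%:M).

Definition unitary2 (R : realType) (A : 'M[R[i]]_2) : Prop :=
  adjmx A *m A = 1%:M /\ A *m adjmx A = 1%:M.

Definition unitary_equiv (R : realType) (U1 U2 : blockop R) : Prop :=
  exists (lam : R) (W : int -> 'M[R[i]]_2),
    (forall n, unitary2 (W n)) /\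
    (forall n m : int, expi lam *: (W n *m U1 n m *m adjmx (W m)) = U2 n m).

(* Block (p,q): only the n = q summand contributes. *)
Definition sfun (R : realType) (r : int -> R) (n : int) : R := Num.sqrt (1 - r n ^+ 2).

Definition Urt (R : realType) (r th : int -> R) : blockop R :=
  fun p q =>
    (if p == q - 1 then
       ketbra (e1 R) (((r q)%:C)%C *: e1 R + (expi (th q) * ((sfun r q)%:C)%C) *: e2 R)
     else 0)
  + (if p == q + 1 then
       ketbra (e2 R) ((- (expi (- th q) * ((sfun r q)%:C)%C)) *: e1 R + ((r q)%:C)%C *: e2 R)
     else 0).

(* Main.v *)
Require Import Defs.
From HB Require Import structures.
From mathcomp Require Import all_boot all_order all_algebra.
From mathcomp Require Import complex.
From mathcomp Require Import reals trigo.
Import Order.TTheory GRing.Theory Num.Theory.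
Local Open Scope ring_scope.
From mathcomp Require Import ring lra zify.

Section S. Variable R : realType.
Local Notation C := R[i].
Implicit Types z w : C. Implicit Types a b : R.
Lemma cjE (x : C) : conjc x = Num.conj x. Proof. by []. Qed.
Lemma adjmxE m n (A : 'M[C]_(m,n)) i j : adjmx A i j = (A j i)^*.
Proof. by rewrite /adjmx !mxE. Qed.
Lemma expiD a b : expi (a + b) = expi a * expi b.
Proof. rewrite /expi cosD sinD; apply/eqP; rewrite eq_complex /=; apply/andP; split; apply/eqP; ring. Qed.
Lemma expiN a : expi (- a) = (expi a)^*.
Proof. by rewrite /expi cosN sinN. Qed.
Lemma expi0 : expi (0:R) = 1.
Proof. by rewrite /expi cos0 sin0. Qed.
Lemma norm_expi a : `|expi a| = 1.
Proof. by rewrite /expi normc_def /= cos2Dsin2 sqrtr1. Qed.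

Lemma unitC z : `|z| = 1 -> z^* = z^-1.
Proof. by move=> h; rewrite invC_norm h expr1n invr1 mul1r. Qed.
Lemma unit_nz z : `|z| = 1 -> z != 0.
Proof. by move=> h; apply/eqP=> z0; move: h; rewrite z0 normr0 => /eqP; rewrite eq_sym oner_eq0. Qed.

Definition ph z : C := if z == 0 then 1 else z / `|z|.
Lemma norm_ph z : `|ph z| = 1.
Proof.
rewrite /ph; case: eqP => [_|/eqP nz]; first by rewrite normr1.
by rewrite normrM normfV normr_id mulfV // normr_eq0.
Qed.
Lemma ph_norm z : ph z * `|z| = z.
Proof.
rewrite /ph; case: eqP => [->|/eqP nz]; first by rewrite normr0 mulr0.
by rewrite -mulrA mulVf ?mulr1 // normr_eq0.
Qed.
Lemma conj_ph_mul z : (ph z)^* * z = `|z|.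
Proof.
rewrite /ph; case: eqP => [->|/eqP nz]; first by rewrite normr0 mulr0.
have e : (`|z| : C)^* = `|z| := conj_normC z.
rewrite rmorphM /= fmorphV /= e mulrAC [z^* * z]mulrC -normCK.
by rewrite expr2 mulfK // normr_eq0.
Qed.

Definition arg z : R := if 0 <= complex.Im z then acos (complex.Re z) else - acos (complex.Re z).
Lemma expi_arg z : `|z| = 1 -> expi (arg z) = z.
Proof.
case: z => a b; rewrite normc_def /= => h.
have h1 : Num.sqrt (a ^+ 2 + b ^+ 2) = 1 by case: h.
have h2 : a ^+ 2 + b ^+ 2 = 1.
  by rewrite -[LHS]sqr_sqrtr ?h1 ?expr1n // addr_ge0 // sqr_ge0.
have ha : -1 <= a <= 1.
  by apply/andP; split; nra.
have hs : sin (acos a) = `|b|.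
  by rewrite sin_acos // -h2 addrAC subrr add0r sqrtr_sqr.
rewrite /expi /arg /=; case: ifP => hb.
  by rewrite acosK ?inE // hs ger0_norm.
by rewrite cosN sinN acosK ?inE // hs ltr0_norm ?opprK // ltNge hb.
Qed.
Lemma Re_norm z : ((complex.Re `|z|)%:C)%C = `|z|.
Proof. by rewrite normc_def. Qed.
Lemma intrec (F : int -> C) (g0 : C) : (forall m, `|F m| = 1) -> `|g0| = 1 ->
  exists g : int -> C, [/\ g 0 = g0, forall m, g (m+1) = F m * g m & forall m, `|g m| = 1].
Proof.
move=> hF hg0.
pose g (m : int) := match m with Posz n => g0 * \prod_(i < n) F i%:Z
  | Negz n => g0 * \prod_(i < n.+1) (F (- (i.+1)%:Z))^-1 end.
exists g; split.
- by rewrite /g /= big_ord0 mulr1.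
- case=> n.
  + rewrite /g -[1]/(Posz 1) -PoszD addn1 big_ord_recr /=.
    by rewrite mulrA [RHS]mulrC.
  + case: n => [|k].
    * rewrite /g /= big_ord1 /=.
      rewrite mulrCA mulfV ?mulr1 ?subnn ?big_ord0 ?mulr1 //; exact/unit_nz/hF.
    * have -> : Negz k.+1 + 1 = Negz k by rewrite !NegzE; lia.
      have hz : F (Negz k.+1) != 0 by exact/unit_nz/hF.
      rewrite /g [in RHS]big_ord_recr /=.
      by field.
- case=> n; rewrite /g normrM hg0 mul1r normr_prod big1 // => i _.
  by rewrite normfV hF invr1.
Qed.
Lemma conjM z w : (z * w)^* = z^* * w^*. Proof. exact: rmorphM. Qed.
Lemma conjN z : (- z)^* = - z^*. Proof. exact: rmorphN. Qed.
Lemma conjB z w : (z - w)^* = z^* - w^*. Proof. exact: rmorphB. Qed.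
Lemma conjD z w : (z + w)^* = z^* + w^*. Proof. exact: rmorphD. Qed.
Lemma conjK z : z^*^* = z. Proof. exact: conjCK. Qed.
Lemma conjR (x : R) : ((x%:C)%C)^* = (x%:C)%C. Proof. exact: conjc_real. Qed.
Lemma conj1 : (1 : C)^* = 1. Proof. exact: rmorph1. Qed.
Lemma conj0 : (0 : C)^* = 0. Proof. exact: rmorph0. Qed.
Lemma conjX z n : (z ^+ n)^* = z^* ^+ n. Proof. exact: rmorphXn. Qed.
Lemma norm1 z : z * z^* = 1 -> `|z| = 1.
Proof. by move=> h; rewrite normC_def h sqrtC1. Qed.
Lemma norm1' z : z^* * z = 1 -> `|z| = 1.
Proof. by rewrite mulrC; apply: norm1. Qed.
Lemma nconj z : `|z| = 1 -> `|z^*| = 1. Proof. by rewrite norm_conjC. Qed.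
Lemma core (p q b0 b1 : int -> C) :
 (forall m, (p m)^* * p m + (q m)^* * q m = 1) ->
 (forall m, (p m)^* * b0 m + (q m)^* * b1 m = 0) ->
 (forall m, (b0 m)^* * b0 m + (b1 m)^* * b1 m = 1) ->
 exists (lam : R) (c d : int -> C) (r th : int -> R),
 [/\ forall m, `|c m| = 1, forall m, `|d m| = 1, forall m, 0 <= r m <= 1, th 0 = 0 /\ th 1 = 0 &
  forall m, [/\ expi lam * c (m-1) * (p m)^* * (c m)^* = (((r m)%:C)%C)^*,
      expi lam * c (m-1) * (q m)^* * (d m)^* = (expi (th m) * ((sfun r m)%:C)%C)^*,
      expi lam * d (m+1) * (b0 m)^* * (c m)^* = (- (expi (- th m) * ((sfun r m)%:C)%C))^* &
      expi lam * d (m+1) * (b1 m)^* * (d m)^* = (((r m)%:C)%C)^* ] ].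
Proof.
move=> h1 h2 h3.
pose del m := p m * b1 m - q m * b0 m.
have hb1 m : b1 m = del m * (p m)^*.
  apply/eqP; rewrite -subr_eq0.
  have -> : b1 m - del m * (p m)^* = q m * ((p m)^* * b0 m + (q m)^* * b1 m)
     - b1 m * ((p m)^* * p m + (q m)^* * q m - 1) by rewrite /del; ring.
  by rewrite h1 h2 subrr !mulr0 subr0.
have hb0 m : b0 m = - del m * (q m)^*.
  apply/eqP; rewrite -subr_eq0.
  have -> : b0 m - (- del m * (q m)^*) = p m * ((p m)^* * b0 m + (q m)^* * b1 m)
     - b0 m * ((p m)^* * p m + (q m)^* * q m - 1) by rewrite /del; ring.
  by rewrite h1 h2 subrr !mulr0 subr0.
have hdel m : `|del m| = 1.
  apply: norm1'; have := h3 m; rewrite hb0 hb1 !conjM conjN !conjK => <-.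
  have := h1 m => e; rewrite -[LHS]mulr1 -e; ring.
clearbody del.
pose zeta := del 0 * (ph (q 0))^* * ph (q 1).
have hzeta : `|zeta| = 1 by rewrite /zeta !normrM norm_conjC !norm_ph hdel !mulr1.
pose lam := arg zeta / 2.
pose e := expi lam.
have he : `|e| = 1 by apply: norm_expi.
have he2 : e * e = zeta by rewrite /e -expiD /lam -splitr expi_arg.
have [c [c0 crec cn]] := @intrec (fun m => e * (ph (p (m + 1)))^*) 1
   (fun m => ltac:(by rewrite normrM norm_conjC norm_ph he mulr1)) (normr1 _).
have crec' m : c m = e * c (m - 1) * (ph (p m))^*.
  by have := crec (m - 1); rewrite subrK => ->; ring.
pose d0 := e * c (-1) * (ph (q 0))^*.
have hF m : `|e^* ^+ 2 * c m * (c (m - 1))^* * del m| = 1.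
  by rewrite !normrM !norm_conjC he !cn hdel !mulr1.
have [d [dd0 drec dn]] := @intrec (fun m => e^* ^+ 2 * c m * (c (m - 1))^* * del m) d0 hF
   (ltac:(by rewrite /d0 !normrM cn norm_conjC norm_ph he !mulr1)).
pose r m := complex.Re `|p m|.
have rE m : ((r m)%:C)%C = `|p m| by rewrite /r Re_norm.
pose om m := (e * c (m - 1))^* * q m * d m.
pose th m : R := if (m == 0) || (m == 1) then 0 else arg (ph (om m)).
have eC : e^* = e^-1 by apply: unitC.
have cC k : (c k)^* = (c k)^-1 by apply: unitC.
have dC k : (d k)^* = (d k)^-1 by apply: unitC.
have delC k : (del k)^* = (del k)^-1 by apply: unitC.
have phC z : (ph z)^* = (ph z)^-1 by apply/unitC/norm_ph.
have ez : e != 0 by apply: unit_nz.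
have cz k : c k != 0 by apply: unit_nz.
have dz k : d k != 0 by apply: unit_nz.
have delz k : del k != 0 by apply: unit_nz.
have phz z : ph z != 0 by apply/unit_nz/norm_ph.
have hsum m : `|p m| ^+ 2 + `|q m| ^+ 2 = 1.
  by rewrite !normCK [p m * _]mulrC [q m * _]mulrC h1.
have sE m : ((sfun r m)%:C)%C = `|q m|.
  pose x := complex.Re `|q m|.
  have xE : (x%:C)%C = `|q m| by rewrite /x Re_norm.
  have x0 : 0 <= x by rewrite -ler0c xE normr_ge0.
  have hr : r m ^+ 2 + x ^+ 2 = 1.
    apply: complexI; rewrite rmorphD /= !rmorphXn /= rE xE hsum //.
  rewrite /sfun (_ : 1 - r m ^+ 2 = x ^+ 2); last by rewrite -hr addrAC subrr add0r.
  by rewrite sqrtr_sqr ger0_norm.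
have Om m : expi (th m) * ((sfun r m)%:C)%C = om m.
  rewrite /th sE; case: ifP => hm.
  - rewrite expi0 mul1r; case/orP: hm => /eqP ->.
    + rewrite /om sub0r dd0 /d0 !conjM eC cC -(conj_ph_mul (q 0)) !phC.
      by clear -ez cz dz delz phz; field; rewrite ?ez ?cz ?dz ?delz ?phz.
    + rewrite /om; have := drec 0; rewrite add0r sub0r => ->.
      have hd0 : del 0 = e * e * ph (q 0) * (ph (q 1))^-1.
        by rewrite he2 /zeta phC; clear -ez cz dz delz phz; field; rewrite ?ez ?cz ?dz ?delz ?phz.
      rewrite subrr dd0 /d0 hd0 !conjM eC !cC -(conj_ph_mul (q 1)) !phC c0 expr2.
      by clear -ez cz dz delz phz; field; rewrite ?ez ?cz ?dz ?delz ?phz.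
  - have hom : `|om m| = `|q m| by rewrite /om !normrM norm_conjC normrM he cn dn !mul1r !mulr1.
    by rewrite expi_arg ?norm_ph // -hom ph_norm.
exists lam, c, d, r, th; split => //.
- move=> m; apply/andP; split; first by rewrite -ler0c rE normr_ge0.
  rewrite -lecR rE (_ : ((1:R)%:C)%C = 1) //.
  rewrite -(expr_le1 (_ : (0 < 2)%N)) ?normr_ge0 // -(hsum m) lerDl exprn_ge0 ?normr_ge0 //.
- move=> m; split.
  + rewrite -/e conjR rE -conj_normC -conj_ph_mul conjM conjK [c m]crec' !conjM !conjK !cC eC.
    by clear -ez cz dz delz phz; field; rewrite ?ez ?cz ?dz ?delz ?phz.
  + by rewrite Om /om !conjM !conjK.
  + rewrite -/e conjN conjM expiN conjK conjR Om /om drec hb0 !conjM conjN !conjK !cC eC delC.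
    by clear -ez cz dz delz phz; field; rewrite ?ez ?cz ?dz ?delz ?phz.
  + rewrite -/e conjR rE -conj_ph_mul drec hb1 !conjM !conjK !cC eC !dC delC phC [c m]crec' phC.
    by clear -ez cz dz delz phz; field; rewrite ?ez ?cz ?dz ?delz ?phz.
Qed.
End S.

Section S. Variable R : realType.
Local Notation C := R[i].
Lemma I2 (i : 'I_2) : i = ord0 \/ i = lift ord0 ord0.
Proof. by case: i => [[|[|//]] Hi]; [left|right]; apply/val_inj. Qed.
Lemma l10 : (lift ord0 ord0 == ord0 :> 'I_2) = false. Proof. by []. Qed.
Lemma l01 : (ord0 == lift ord0 ord0 :> 'I_2) = false. Proof. by []. Qed.
Lemma n0 : (nat_of_ord (ord0 : 'I_2) == 0%N) = true. Proof. by []. Qed.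
Lemma n1 : (nat_of_ord (lift ord0 ord0 : 'I_2) == 0%N) = false. Proof. by []. Qed.
Ltac mx2 := do 3 rewrite ?mxE ?big_ord_recl ?big_ord0 ?addr0; rewrite ?cjE.
Lemma o01 : (ord0 == 1 :> 'I_2) = false. Proof. by []. Qed.
Lemma o11 : (lift ord0 ord0 == 1 :> 'I_2) = true. Proof. by []. Qed.
Lemma o00 : (ord0 == 0 :> 'I_2) = true. Proof. by []. Qed.
Lemma o10 : (lift ord0 ord0 == 0 :> 'I_2) = false. Proof. by []. Qed.
Ltac ev := rewrite ?eqxx ?l10 ?l01 ?n0 ?n1 ?o01 ?o11 ?o00 ?o10 ?conj0 ?conj1.
Definition dg (a b : C) : 'M[C]_2 :=
  \matrix_(i, j) if i == j then (if (i : nat) == 0%N then a else b) else 0.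
Definition sel (i : 'I_2) (a b : C) := if (i : nat) == 0%N then a else b.
Lemma dg_entry a b a' b' (M : 'M[C]_2) i j :
  (dg a b *m M *m adjmx (dg a' b')) i j = sel i a b * M i j * (sel j a' b')^*.
Proof.
mx2; rewrite /sel; case: (I2 i) => ->; case: (I2 j) => ->; ev.
all: ring.
Qed.
Lemma i1 (m : int) : (m - 1 == m + 1) = false. Proof. lia. Qed.
Lemma i2 (m : int) : (m + 1 == m - 1) = false. Proof. lia. Qed.
Lemma UrtA (r th : int -> R) m i j : Urt r th (m - 1) m i j =
  if (i : nat) == 0%N then (if (j : nat) == 0%N then (((r m)%:C)%C)^* else (expi (th m) * ((sfun r m)%:C)%C)^*) else 0.
Proof.
rewrite /Urt eqxx i1 addr0 /ketbra /e1 /e2.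
mx2; case: (I2 i) => ->; case: (I2 j) => ->; ev.
all: by rewrite ?(mulr1, mulr0, addr0, add0r, mul1r, mul0r).
Qed.
Lemma UrtB (r th : int -> R) m i j : Urt r th (m + 1) m i j =
  if (i : nat) == 0%N then 0 else (if (j : nat) == 0%N then (- (expi (- th m) * ((sfun r m)%:C)%C))^* else (((r m)%:C)%C)^*).
Proof.
rewrite /Urt eqxx i2 add0r /ketbra /e1 /e2.
mx2; case: (I2 i) => ->; case: (I2 j) => ->; ev.
all: by rewrite ?(mulr1, mulr0, addr0, add0r, mul1r, mul0r).
Qed.
Lemma Urt0 (r th : int -> R) n m : m != n + 1 -> m != n - 1 -> Urt r th n m = 0.
Proof.
move=> h1 h2.
have a : (n == m - 1) = false by apply/eqP => E; move: h1; rewrite E subrK eqxx.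
have b : (n == m + 1) = false by apply/eqP => E; move: h2; rewrite E addrK eqxx.
by rewrite /Urt a b addr0.
Qed.
Lemma dg_unitary a b : `|a| = 1 -> `|b| = 1 -> unitary2 (dg a b).
Proof.
move=> ha hb; have aC := @unitC _ _ ha; have bC := @unitC _ _ hb.
have az := @unit_nz _ _ ha; have bz := @unit_nz _ _ hb.
split; apply/matrixP => i j; mx2; case: (I2 i) => ->; case: (I2 j) => ->; ev;
  rewrite ?aC ?bC ?(mulr1, mulr0, addr0, add0r, mul1r, mul0r) ?mulVf ?mulfV //.
Qed.
Notation o0 := (ord0 : 'I_2).
Notation o1 := (lift ord0 ord0 : 'I_2).
Lemma stage2 (V : blockop R) :
  (forall n m, m != n + 1 -> m != n - 1 -> V n m = 0) ->
  (forall m j, V (m-1) m o1 j = 0) ->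
  (forall m j, V (m+1) m o0 j = 0) ->
  (forall m, V (m-1) m o0 o0 * (V (m-1) m o0 o0)^* + V (m-1) m o0 o1 * (V (m-1) m o0 o1)^* = 1) ->
  (forall m, V (m-1) m o0 o0 * (V (m+1) m o1 o0)^* + V (m-1) m o0 o1 * (V (m+1) m o1 o1)^* = 0) ->
  (forall m, V (m+1) m o1 o0 * (V (m+1) m o1 o0)^* + V (m+1) m o1 o1 * (V (m+1) m o1 o1)^* = 1) ->
  exists r th : int -> R, (forall n, 0 <= r n <= 1) /\ th 0 = 0 /\ th 1 = 0 /\ unitary_equiv V (Urt r th).
Proof.
move=> V0 VA VB H1 H2 H3.
have [lam [c [d [r [th [cn dn rb [th0 th1] E]]]]]] :=
  @core R (fun m => (V (m-1) m o0 o0)^*) (fun m => (V (m-1) m o0 o1)^*)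
          (fun m => (V (m+1) m o1 o0)^*) (fun m => (V (m+1) m o1 o1)^*)
  (fun m => ltac:(by rewrite !conjK H1)) (fun m => ltac:(by rewrite !conjK H2))
  (fun m => ltac:(by rewrite !conjK H3)).
exists r, th; do 3 split => //.
exists lam, (fun n => dg (c n) (d n)); split; first by move=> n; apply: dg_unitary.
have KA m : expi lam *: (dg (c (m-1)) (d (m-1)) *m V (m-1) m *m adjmx (dg (c m) (d m))) = Urt r th (m-1) m.
  have [E1 E2 E3 E4] := E m; rewrite !conjK in E1 E2 E3 E4.
  apply/matrixP => i j; rewrite mxE dg_entry UrtA /sel.
  case: (I2 i) => ->; case: (I2 j) => ->; ev; rewrite ?VA ?(mulr0, mul0r) //.
  - by rewrite -E1 !mulrA.
  - by rewrite -E2 !mulrA.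
have KB m : expi lam *: (dg (c (m+1)) (d (m+1)) *m V (m+1) m *m adjmx (dg (c m) (d m))) = Urt r th (m+1) m.
  have [E1 E2 E3 E4] := E m; rewrite !conjK in E1 E2 E3 E4.
  apply/matrixP => i j; rewrite mxE dg_entry UrtB /sel.
  case: (I2 i) => ->; case: (I2 j) => ->; ev; rewrite ?VB ?(mulr0, mul0r) //.
  - by rewrite -E3 !mulrA.
  - by rewrite -E4 !mulrA.
move=> n m.
have [hA|hA] := eqVneq m (n+1).
  by move: (KA m); rewrite hA addrK.
have [hB|hB] := eqVneq m (n-1).
  by move: (KB m); rewrite hB subrK.
by rewrite V0 // Urt0 // mulmx0 mul0mx scaler0.
Qed.
End S.

Section S. Variable R : realType.
Local Notation C := R[i].
Ltac mx2 := do 3 rewrite ?mxE ?big_ord_recl ?big_ord0 ?addr0; rewrite ?cjE.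
Ltac ev := rewrite ?eqxx ?l10 ?l01 ?n0 ?n1 ?o01 ?o11 ?o00 ?o10 ?conj0 ?conj1.
Notation o0 := (ord0 : 'I_2).
Notation o1 := (lift ord0 ord0 : 'I_2).

Lemma adjmxZ k m n (A : 'M[C]_(m,n)) : adjmx (k *: A) = k^* *: adjmx A.
Proof. by apply/matrixP => i j; rewrite !mxE !cjE conjM. Qed.
Lemma adjmx_mul m n p (A : 'M[C]_(m,n)) (B : 'M[C]_(n,p)) : adjmx (A *m B) = adjmx B *m adjmx A.
Proof. by rewrite /adjmx map_mxM trmx_mul. Qed.
Lemma adjmxK m n (A : 'M[C]_(m,n)) : adjmx (adjmx A) = A.
Proof. by apply/matrixP => i j; rewrite !mxE !cjE conjK. Qed.
Lemma adjmxD m n (A B : 'M[C]_(m,n)) : adjmx (A + B) = adjmx A + adjmx B.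
Proof. by apply/matrixP => i j; rewrite !mxE !cjE conjD. Qed.
Lemma adjmx0 m n : adjmx (0 : 'M[C]_(m,n)) = 0.
Proof. by apply/matrixP => i j; rewrite !mxE !cjE conj0. Qed.
Lemma adjmx_col m j (X : 'M[C]_2) (M : 'M[C]_(2,m)) : adjmx (col j X) *m M = row j (adjmx X *m M).
Proof. by apply/matrixP => i l; rewrite !mxE; apply: eq_bigr => k _; rewrite !mxE. Qed.

Definition knorm (x : 'cV[C]_2) : C := (sqrtC ((adjmx x *m x) ord0 ord0))^-1.
Definition unitv x := knorm x *: x.
Definition colnz (A : 'M[C]_2) : 'cV[C]_2 := col (odflt ord0 [pick j | col j A != 0]) A.

Lemma sq_expand (x : 'cV[C]_2) : (adjmx x *m x) ord0 ord0 = (x o0 0)^* * x o0 0 + (x o1 0)^* * x o1 0.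
Proof. by mx2. Qed.

Lemma unitv1 x : x != 0 -> adjmx (unitv x) *m unitv x = 1.
Proof.
move=> nz; set s := (adjmx x *m x) ord0 ord0.
have s0 : 0 <= s by rewrite /s sq_expand addr_ge0 // mulrC -normCK exprn_ge0.
have sn : s != 0.
  apply: contra nz; rewrite /s sq_expand mulrC [_ * x o1 0]mulrC -!normCK.
  rewrite paddr_eq0 ?exprn_ge0 // !expf_eq0 /= !normr_eq0 => /andP [/eqP a /eqP b].
  by apply/eqP/matrixP => i j; rewrite (ord1 j) mxE; case: (I2 i) => ->.
have q0 : 0 <= sqrtC s by rewrite sqrtC_ge0.
have qn : sqrtC s != 0 by rewrite sqrtC_eq0.
rewrite /unitv adjmxZ -scalemxAl -scalemxAr scalerA [adjmx x *m x]mx11_scalar -/s.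
rewrite scale_scalar_mx; congr (_%:M); rewrite /knorm -/s fmorphV /= geC0_conj //.
rewrite -{3}(sqrtCK s) expr2; field; exact: qn.
Qed.
Lemma colnz_neq0 A : A != 0 -> colnz A != 0.
Proof.
move=> nz; rewrite /colnz; case: pickP => [j /= -> // | h] /=.
exfalso; move/eqP: nz; apply; apply/matrixP => i j.
have := h j; rewrite /= => /negbFE /eqP /matrixP /(_ i ord0); rewrite !mxE => ->.
by [].
Qed.
Lemma ortho1 m X (M : 'M[C]_(2,m)) : adjmx X *m M = 0 -> adjmx (unitv (colnz X)) *m M = 0.
Proof. by move=> h; rewrite /unitv adjmxZ -scalemxAl /colnz adjmx_col h row0 scaler0. Qed.
Lemma ortho2 X Y : adjmx X *m Y = 0 -> adjmx (unitv (colnz X)) *m unitv (colnz Y) = 0.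
Proof. by move=> h; rewrite [unitv (colnz Y)]/unitv [colnz Y]/colnz colE -scalemxAr mulmxA (@ortho1 _ _ _ h) mul0mx scaler0. Qed.
Lemma adjmulE (T : blockop R) n m : adjmul T n m = adjmx (T (n-1) n) *m T (n-1) m
   + adjmx (T n n) *m T n m + adjmx (T (n+1) n) *m T (n+1) m.
Proof.
rewrite /adjmul !big_ord_recl big_ord0 addr0 /= /bump /=.
have -> : n - 1 + Posz 1 = n by lia.
have -> : n - 1 + Posz 2 = n + 1 by lia.
by rewrite addr0 addrA.
Qed.
Lemma muladjE (T : blockop R) n m : muladj T n m = T n (n-1) *m adjmx (T m (n-1))
   + T n n *m adjmx (T m n) + T n (n+1) *m adjmx (T m (n+1)).
Proof.
rewrite /muladj !big_ord_recl big_ord0 addr0 /= /bump /=.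
have -> : n - 1 + Posz 1 = n by lia.
have -> : n - 1 + Posz 2 = n + 1 by lia.
by rewrite addr0 addrA.
Qed.
Lemma qw_facts (U : blockop R) : is_qwalk U ->
 [/\ forall n m, m != n + 1 -> m != n - 1 -> U n m = 0,
     forall n, U n (n+1) != 0, forall n, U n (n-1) != 0,
     forall n, adjmx (U n (n+1)) *m U n (n-1) = 0 &
     forall m, adjmx (U (m-1) m) *m U (m-1) m + adjmx (U (m+1) m) *m U (m+1) m = 1 ].
Proof.
case=> hr [ha hm].
have Z n m : m != n + 1 -> m != n - 1 -> U n m = 0.
  by move=> h1 h2; apply/eqP; rewrite -mxrank_eq0 hr (negbTE h1) (negbTE h2).
split => //.
- by move=> n; rewrite -mxrank_eq0 hr eqxx.
- by move=> n; rewrite -mxrank_eq0 hr eqxx orbT.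
- move=> n; have := ha (n+1) (n-1); rewrite adjmulE addrK.
  rewrite (Z (n+1) (n+1)) ?(Z (n+1+1) (n-1)); try lia.
  rewrite adjmx0 mul0mx mulmx0 !addr0 => ->.
  have -> : (n + 1 == n - 1) = false by lia.
  by apply/matrixP => i j; rewrite !mxE mulr0n mul0rn.
- move=> m; have := ha m m; rewrite adjmulE eqxx (Z m m); try lia.
  by rewrite adjmx0 mul0mx addr0.
Qed.
Definition Wmk (a b : 'cV[C]_2) : 'M[C]_2 :=
  \matrix_(i, k) if i == o0 then (a k ord0)^* else (b k ord0)^*.
Lemma Wmk_row0 a b m (M : 'M[C]_(2,m)) j : (Wmk a b *m M) o0 j = (adjmx a *m M) ord0 j.
Proof. by rewrite !mxE; apply: eq_bigr => k _; rewrite !mxE eqxx. Qed.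
Lemma Wmk_row1 a b m (M : 'M[C]_(2,m)) j : (Wmk a b *m M) o1 j = (adjmx b *m M) ord0 j.
Proof. by rewrite !mxE; apply: eq_bigr => k _; rewrite !mxE l10. Qed.
Lemma Wmk_unit a b : adjmx a *m a = 1 -> adjmx b *m b = 1 -> adjmx a *m b = 0 -> unitary2 (Wmk a b).
Proof.
move=> ha hb hab.
have e1 := congr1 (fun M : 'M[C]_1 => M ord0 ord0) ha.
have e2 := congr1 (fun M : 'M[C]_1 => M ord0 ord0) hb.
have e3 := congr1 (fun M : 'M[C]_1 => M ord0 ord0) hab.
move: e1 e2 e3 => /=; mx2; rewrite !eqxx !mulr1n => e1 e2 e3.
have e4 : (b o0 ord0)^* * a o0 ord0 + (b o1 ord0)^* * a o1 ord0 = 0.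
  rewrite -[LHS]conjK conjD !conjM !conjK.
  by rewrite [b o0 ord0 * _]mulrC [b o1 ord0 * _]mulrC e3 conj0.
have h : Wmk a b *m adjmx (Wmk a b) = 1.
  apply/matrixP => i j; mx2; case: (I2 i) => ->; case: (I2 j) => ->; ev; rewrite ?mulr1n ?mulr0n !conjK //.
by split => //; apply: mulmx1C.
Qed.
End S.

Section S. Variable R : realType.
Local Notation C := R[i].
Notation o0 := (ord0 : 'I_2).
Notation o1 := (lift ord0 ord0 : 'I_2).

Lemma unitary_mul (A B : 'M[C]_2) : unitary2 A -> unitary2 B -> unitary2 (A *m B).
Proof.
move=> [a1 a2] [b1 b2]; split; rewrite adjmx_mul.
- by rewrite mulmxA -(mulmxA (adjmx B)) a1 mulmx1 b1.
- by rewrite mulmxA -(mulmxA A) b2 mulmx1 a2.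
Qed.
Lemma ue_trans (U V X : blockop R) : unitary_equiv U V -> unitary_equiv V X -> unitary_equiv U X.
Proof.
move=> [l1 [W1 [h1 e1]]] [l2 [W2 [h2 e2]]].
exists (l2 + l1), (fun n => W2 n *m W1 n); split.
  by move=> n; apply: unitary_mul.
move=> n m; rewrite -e2 -e1 expiD -scalerA -scalemxAr -scalemxAl adjmx_mul !mulmxA.
by [].
Qed.
Lemma conj_prod (Wa Wb X : 'M[C]_2) : adjmx Wa *m Wa = 1 ->
  adjmx (Wa *m X *m adjmx Wb) *m (Wa *m X *m adjmx Wb) = Wb *m (adjmx X *m X) *m adjmx Wb.
Proof.
move=> h; rewrite !adjmx_mul adjmxK !mulmxA.
by rewrite -(mulmxA (Wb *m adjmx X)) h mulmx1.
Qed.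
Ltac mx2 := do 3 rewrite ?mxE ?big_ord_recl ?big_ord0 ?addr0; rewrite ?cjE.
Ltac ev := rewrite ?eqxx ?l10 ?l01 ?n0 ?n1 ?o01 ?o11 ?o00 ?o10 ?conj0 ?conj1.
End S.
Notation o0 := (ord0 : 'I_2).
Notation o1 := (lift ord0 ord0 : 'I_2).
Ltac mx2' := do 3 rewrite ?mxE ?big_ord_recl ?big_ord0 ?addr0; rewrite ?cjE.
Ltac ev' := rewrite ?eqxx ?l10 ?l01 ?n0 ?n1 ?o01 ?o11 ?o00 ?o10 ?conj0 ?conj1.
Arguments unitv {R}.
Arguments colnz {R}.
Arguments Wmk {R}.
Theorem theorem2p4 (R : realType) (U : blockop R) :
  is_qwalk U ->
  exists r th : int -> R,
    (forall n, 0 <= r n <= 1) /\ th 0 = 0 /\ th 1 = 0 /\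
    unitary_equiv U (Urt r th).
Proof.
move=> hq; have [Z NA NB F3 F1] := @qw_facts _ _ hq.
pose uA n := unitv (colnz (U n (n+1))).
pose uB n := unitv (colnz (U n (n-1))).
have uA1 n : adjmx (uA n) *m uA n = 1 := @unitv1 _ _ (@colnz_neq0 _ _ (NA n)).
have uB1 n : adjmx (uB n) *m uB n = 1 := @unitv1 _ _ (@colnz_neq0 _ _ (NB n)).
have F3' n : adjmx (U n (n-1)) *m U n (n+1) = 0.
  by rewrite -[LHS]adjmxK adjmx_mul adjmxK F3 adjmx0.
have uAB n : adjmx (uA n) *m uB n = 0 := @ortho2 _ _ _ (F3 n).
have uAU n : adjmx (uA n) *m U n (n-1) = 0 := @ortho1 _ _ _ _ (F3 n).
have uBA n : adjmx (uB n) *m U n (n+1) = 0 := @ortho1 _ _ _ _ (F3' n).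
pose W n := Wmk (uA n) (uB n).
have hW n : unitary2 (W n) := @Wmk_unit _ _ _ (uA1 n) (uB1 n) (uAB n).
pose V n m := W n *m U n m *m adjmx (W m).
have eUV : unitary_equiv U V.
  by exists 0, W; split => // n m; rewrite expi0 scale1r.
have SV1 m j : V (m-1) m o1 j = 0.
  rewrite /V mxE big1 // => k _.
  by rewrite Wmk_row1; have := uBA (m-1); rewrite subrK => ->; rewrite mxE mul0r.
have SV2 m j : V (m+1) m o0 j = 0.
  rewrite /V mxE big1 // => k _.
  by rewrite Wmk_row0; have := uAU (m+1); rewrite addrK => ->; rewrite mxE mul0r.
have V0 n m : m != n + 1 -> m != n - 1 -> V n m = 0.
  by move=> h1 h2; rewrite /V Z // mulmx0 mul0mx.
have F1' m : adjmx (V (m-1) m) *m V (m-1) m + adjmx (V (m+1) m) *m V (m+1) m = 1.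
  rewrite /V !conj_prod; try exact: (hW _).1.
  by rewrite -mulmxDl -mulmxDr F1 mulmx1 (hW m).2.
clearbody V.
have H m : [/\ V (m-1) m o0 o0 * (V (m-1) m o0 o0)^* + V (m-1) m o0 o1 * (V (m-1) m o0 o1)^* = 1,
   V (m-1) m o0 o0 * (V (m+1) m o1 o0)^* + V (m-1) m o0 o1 * (V (m+1) m o1 o1)^* = 0 &
   V (m+1) m o1 o0 * (V (m+1) m o1 o0)^* + V (m+1) m o1 o1 * (V (m+1) m o1 o1)^* = 1].
  pose Mm : 'M[R[i]]_2 := \matrix_(i, j) if j == o0 then (V (m-1) m o0 i)^* else (V (m+1) m o1 i)^*.
  have hM : Mm *m adjmx Mm = 1.
    apply/matrixP => i k; have := congr1 (fun M : 'M[R[i]]_2 => M i k) (F1' m).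
    mx2'; rewrite !SV1 !SV2; ev'.
    by rewrite !(mul0r, mulr0, addr0, add0r) !conjK.
  have hM' := mulmx1C hM.
  have g i k := congr1 (fun M : 'M[R[i]]_2 => M i k) hM'.
  move: (g o0 o0) (g o0 o1) (g o1 o1); mx2'; ev'; rewrite !conjK ?mulr1n ?mulr0n => a b c.
  by split.
have H1 m := let: And3 x _ _ := H m in x.
have H2 m := let: And3 _ x _ := H m in x.
have H3 m := let: And3 _ _ x := H m in x.
have [r [th [rb [t0 [t1 e2]]]]] := @stage2 _ V V0 SV1 SV2 H1 H2 H3.
exists r, th; do 3 split => //.
exact: ue_trans eUV e2.
Qed.
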